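(* Consider the multistage ANC game described in the context, with linear plant $x^{t+1}=A_tx^t+b^tB_tu^t$, and assume: (i) for every $t=0,\dots,T-1$ there exist scalars $e_t,d_t$ and functions $\alpha_t,\beta_t:\mathbb{R}_+\to\mathbb{R}$ with $\lim_{y\to+\infty}\alpha_t(y)=\lim_{y\to+\infty}\beta_t(y)=+\infty$, $\alpha_t(y)\ge e_t$, $\beta_t(y)\ge d_t$, such that $\sigma^t(x,u)\ge\alpha_t(\|u\|)+\beta_t(\|x\|)$ for all $x\in\mathbb{R}^n$, $u\in\mathbb{R}^m$; (ii) for all $t=0,\dots,T-1$, $\sigma^t:\mathbb{R}^n\times\mathbb{R}^m\to\mathbb{R}_+$ is convex in both its arguments (jointly); (iii) $\sigma^T:\mathbb{R}^n\to\mathbb{R}_+$ is convex and there exist a scalar $d_T$ and a function $\beta_T:\mathbb{R}_+\to\mathbb{R}_+$ with $\lim_{y\to+\infty}\beta_T(y)=+\infty$, $\beta_T(y)\ge d_T$, such that $\sigma^T(x)\ge\beta_T(\|x\|)$; (iv) $\sigma^T$ is continuous; for every $t=0,\dots,T-1$, $\sigma^t(\cdot,u)$ is continuous uniformly in $u\in\mathbb{R}^m$, and $\sigma^t(x,\cdot)$ is continuous for every $x\in\mathbb{R}^n$. Define $V_T(x,s)=\sigma^T(x)-g^T(s)$ and, recursively for $t=T-1,\dots,0$, \[ V_t(x,s)=\inf_{u\in\mathbb{R}^m}\sup_{p\in\mathcal{S}_{N-1}}p'\mathcal{V}_t(x,s,u), \] where $\mathcal{V}_t(x,s,u)\in\mathbb{R}^N$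 has components \[ [\mathcal{V}_t(x,s,u)]_a=\sigma^t(x,u)-g^t(a,s)+\sum_{i\in\mathcal{F}}P^t_{si}(a)\big[q^t_iV_{t+1}(A_tx+B_tu,i)+(1-q^t_i)V_{t+1}(A_tx,i)\big]. \] Then for all $t=0,\dots,T-1$, $x\in\mathbb{R}^n$, $s\in\mathcal{F}$, the value functions $V_t$ are well defined, in the sense that \[ \inf_{u\in\mathbb{R}^m}\sup_{p\in\mathcal{S}_{N-1}}p'\mathcal{V}_t(x,s,u)=\sup_{p\in\mathcal{S}_{N-1}}\inf_{u\in\mathbb{R}^m}p'\mathcal{V}_t(x,s,u) \] and this common value is finite, and $V_t(\cdot,s)$ is convex and continuous in $x$. Furthermore, the strategy pair defined by $(u^* )^t=\arg\inf_{u\in\mathbb{R}^m}\sup_{p\in\mathcal{S}_{N-1}}p'\mathcal{V}_t(x,s,u)$ and $(p^* )^t=\arg\sup_{p\in\mathcal{S}_{N-1}}\inf_{u\in\mathbb{R}^m}p'\mathcal{V}_t(x,s,u)$ is a saddle-point strategy of the multistage ANC game.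
   Context: Multistage ANC game on horizon $\{0,\dots,T\}$. Regimes $\mathcal{F}=\{1,\dots,|\mathcal{F}|\}$, jammer actions $\mathcal{A}=\{1,\dots,N\}$, $\mathcal{S}_{N-1}$ the unit simplex in $\mathbb{R}^N$. For each $t$ and $a\in\mathcal{A}$, $P^t(a)$ is an $|\mathcal{F}|\times|\mathcal{F}|$ row-stochastic matrix, and $q^t=(q^t_1,\dots,q^t_{|\mathcal{F}|})'\in[0,1]^{|\mathcal{F}|}$. $A_t,B_t$ are real matrices of sizes $n\times n$, $n\times m$. The state is $(x^t,s^t)\in\mathbb{R}^n\times\mathcal{F}$, with given initial $(x^0,s^0)$. At each $t\le T-1$ the controller, observing $(x^t,s^t)$, chooses $u^t\in\mathbb{R}^m$; the jammer, observing $(x^t,s^t)$ and $u^t$, chooses a probability vector $p^t\in\mathcal{S}_{N-1}$ and $a^t$ is drawn according to $p^t$; then $s^{t+1}$ is drawn with $\mathrm{Pr}(s^{t+1}=i\mid s^t=j,a^t=a)=P^t_{ji}(a)$, $b^t\in\{0,1\}$ is drawn with $\mathrm{Pr}(b^t=1\mid s^{t+1}=i)=q^t_i$ (conditionally independent of everything else given $s^{t+1}$), and $x^{t+1}=A_tx^t+b^tB_tu^t$. Stage costs $\sigma^t:\mathbb{R}^n\times\mathbb{R}^m\to\mathbb{R}_+$, terminal cost $\sigma^T:\mathbb{R}^n\to\mathbb{R}_+$, jammer costs $g^t:\mathcal{A}\times\mathcal{F}\to\mathbb{R}$ ($t<T$) and $g^T:\mathcal{F}\to\mathbb{R}$. The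 total payoff is $\Sigma=\sum_{t=0}^{T-1}\sigma^t(x^t,u^t)+\sigma^T(x^T)-\sum_{t=0}^{T-1}g^t(a^t,s^t)$; the controller minimizes and the jammer maximizes its expectation $\mathbb{E}^{u,p}[\Sigma]$ over strategy sequences $\{u^t\}$, $\{p^t\}$. A saddle-point strategy is a pair $(\{(u^* )^t\},\{(p^* )^t\})$ with $\mathbb{E}^{u^*,p^*}[\Sigma]=\inf_{\{u^t\}}\sup_{\{p^t\}}\mathbb{E}^{u,p}[\Sigma]=\sup_{\{p^t\}}\inf_{\{u^t\}}\mathbb{E}^{u,p}[\Sigma]$. *)

(* Defs.v *)
From HB Require Import structures.
From mathcomp Require Import all_boot all_order all_algebra.
From mathcomp Require Import all_classical all_reals all_analysis.
Set Implicit Arguments. Unset Strict Implicit. Unset Printing Implicit Defensive.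
Import Order.TTheory GRing.Theory Num.Theory.
Import numFieldNormedType.Exports.
Local Open Scope ring_scope.
Local Open Scope classical_set_scope.

Section ANC.
Context {R : realType}.

Definition enorm (k : nat) (v : 'cV[R]_k) : R := Num.sqrt (\sum_i v i 0 ^+ 2).

Definition tends_to_infty (f : R -> R) : Prop :=
  forall M : R, exists y0 : R, forall y, y0 <= y -> M <= f y.

Definition simplex (N : nat) : set 'cV[R]_N :=
  [set p | (forall a, 0 <= p a 0) /\ \sum_a p a 0 = 1].
Arguments simplex : clear implicits.

Definition dotv (N : nat) (p v : 'cV[R]_N) : R := \sum_a p a 0 * v a 0.

Definition convex_fun (k : nat) (f : 'cV[R]_k -> R) : Prop :=
  forall (x y : 'cV[R]_k) (l : R), 0 <= l <= 1 ->
    f (l *: x + (1 - l) *: y) <= l * f x + (1 - l) * f y.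

Definition jointly_convex (n m : nat) (f : 'cV[R]_n -> 'cV[R]_m -> R) : Prop :=
  forall (x1 x2 : 'cV[R]_n) (u1 u2 : 'cV[R]_m) (l : R), 0 <= l <= 1 ->
    f (l *: x1 + (1 - l) *: x2) (l *: u1 + (1 - l) *: u2)
      <= l * f x1 u1 + (1 - l) * f x2 u2.

Definition unif_cont_in_x (n m : nat) (f : 'cV[R]_n -> 'cV[R]_m -> R) : Prop :=
  forall (x : 'cV[R]_n) (eps : R), 0 < eps -> exists delta : R, 0 < delta /\
    forall (x' : 'cV[R]_n) (u : 'cV[R]_m), enorm (x' - x) < delta ->
      `|f x' u - f x u| < eps.

Variables (n m nF N T : nat).
Variables (A : nat -> 'M[R]_n) (B : nat -> 'M[R]_(n, m)).
(* P t a j i = P^t_{ji}(a) *)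
Variable P : nat -> 'I_N -> 'I_nF -> 'I_nF -> R.
Variable q : nat -> 'I_nF -> R.
Variable sig : nat -> 'cV[R]_n -> 'cV[R]_m -> R.
Variable sigT : 'cV[R]_n -> R.
Variable g : nat -> 'I_N -> 'I_nF -> R.
Variable gT : 'I_nF -> R.

(* the vector \mathcal{V}_t(x,s,u) built from the next value function W = V_{t+1} *)
Definition Vvec (t : nat) (W : 'cV[R]_n -> 'I_nF -> R)
    (x : 'cV[R]_n) (s : 'I_nF) (u : 'cV[R]_m) : 'cV[R]_N :=
  \col_a (sig t x u - g t a s +
    \sum_i P t a s i * (q t i * W (A t *m x + B t *m u) i
                        + (1 - q t i) * W (A t *m x) i)).

Definition infsup (t : nat) (W : 'cV[R]_n -> 'I_nF -> R) (x : 'cV[R]_n) (s : 'I_nF)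
  : \bar R :=
  ereal_inf [set ereal_sup [set (dotv p (Vvec t W x s u))%:E | p in simplex N]
            | u in [set: 'cV[R]_m]].

Definition supinf (t : nat) (W : 'cV[R]_n -> 'I_nF -> R) (x : 'cV[R]_n) (s : 'I_nF)
  : \bar R :=
  ereal_sup [set ereal_inf [set (dotv p (Vvec t W x s u))%:E | u in [set: 'cV[R]_m]]
            | p in simplex N].

(* Vrev k = V_{T-k} *)
Fixpoint Vrev (k : nat) : 'cV[R]_n -> 'I_nF -> R :=
  match k with
  | 0 => fun x s => sigT x - gT s
  | k'.+1 => fun x s => fine (infsup (T - k'.+1) (Vrev k') x s)
  end.

Definition Vval (t : nat) : 'cV[R]_n -> 'I_nF -> R := Vrev (T - t).

(* controller strategies: u^t = us t x^t s^t ;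
   jammer strategies: p^t = ps t x^t s^t u^t *)
Definition ctrl_strat := nat -> 'cV[R]_n -> 'I_nF -> 'cV[R]_m.
Definition jam_strat := nat -> 'cV[R]_n -> 'I_nF -> 'cV[R]_m -> 'cV[R]_N.

Definition admissible_jam (ps : jam_strat) : Prop :=
  forall t x s u, (t < T)%N -> simplex N (ps t x s u).

(* a realization: for each t < T, (a^t, s^{t+1}, b^t) *)
Definition path := {ffun 'I_T -> 'I_N * 'I_nF * bool}.

Variables (x0 : 'cV[R]_n) (s0 : 'I_nF).

Definition sAt (w : path) (t : nat) : 'I_nF :=
  match t with
  | 0 => s0
  | t'.+1 => match (insub t' : option 'I_T) with
             | Some i => (w i).1.2
             | None => s0 end
  end.

Fixpoint xAt (us : ctrl_strat) (w : path) (t : nat) : 'cV[R]_n :=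
  match t with
  | 0 => x0
  | t'.+1 => let x := xAt us w t' in
             match (insub t' : option 'I_T) with
             | Some i => A t' *m x
                         + (nat_of_bool (w i).2)%:R *: (B t' *m us t' x (sAt w t'))
             | None => x end
  end.

Definition uAt (us : ctrl_strat) (w : path) (t : nat) : 'cV[R]_m :=
  us t (xAt us w t) (sAt w t).

Definition path_prob (us : ctrl_strat) (ps : jam_strat) (w : path) : R :=
  \prod_(i < T)
    (ps i (xAt us w i) (sAt w i) (uAt us w i) (w i).1.1 0
     * P i (w i).1.1 (sAt w i) (w i).1.2
     * (if (w i).2 then q i (w i).1.2 else 1 - q i (w i).1.2)).

Definition payoff (us : ctrl_strat) (w : path) : R :=
  \sum_(i < T) (sig i (xAt us w i) (uAt us w i) - g i (w i).1.1 (sAt w i))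
  + sigT (xAt us w T) - gT (sAt w T).

Definition expected_payoff (us : ctrl_strat) (ps : jam_strat) : R :=
  \sum_(w : path) path_prob us ps w * payoff us w.

Definition saddle_point (us : ctrl_strat) (ps : jam_strat) : Prop :=
  admissible_jam ps /\
  (expected_payoff us ps)%:E =
    ereal_inf [set ereal_sup [set (expected_payoff u p)%:E | p in admissible_jam]
              | u in [set: ctrl_strat]] /\
  (expected_payoff us ps)%:E =
    ereal_sup [set ereal_inf [set (expected_payoff u p)%:E | u in [set: ctrl_strat]]
              | p in admissible_jam].

End ANC.
Arguments simplex {R} N _.

(* Main.v *)
Require Import Defs.
From HB Require Import structures.
From mathcomp Require Import all_boot all_order all_algebra.
From mathcomp Require Import all_classical all_reals all_analysis.
Import Order.TTheory GRing.Theory Num.Theory.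
Import numFieldNormedType.Exports.
Local Open Scope ring_scope.
Local Open Scope classical_set_scope.

From mathcomp Require Import ring lra.
Set Implicit Arguments. Unset Strict Implicit. Unset Printing Implicit Defensive.

Section MxNorm.
Variable R : realType.

Lemma mxnorm_entry a b (M : 'M[R]_(a, b)) i j : `|M i j| <= `|M|.
Proof.
have -> : `|M| = mx_norm M by [].
rewrite mx_normrE.
exact: (le_bigmax _ (fun ij : 'I_a * 'I_b => `|M ij.1 ij.2|) (i, j)).
Qed.

Lemma mxnorm_le a b (M : 'M[R]_(a, b)) c : 0 <= c ->
  (forall i j, `|M i j| <= c) -> `|M| <= c.
Proof.
move=> c0 H; have -> : `|M| = mx_norm M by [].
rewrite mx_normrE.
by apply: bigmax_le => // -[i j] _; exact: H.
Qed.

Lemma mxnorm_lt a b (M : 'M[R]_(a, b)) c : 0 < c ->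
  (forall i j, `|M i j| < c) -> `|M| < c.
Proof.
move=> c0 H; have -> : `|M| = mx_norm M by [].
rewrite mx_normrE.
by apply: bigmax_lt => // -[i j] _; exact: H.
Qed.

Lemma mxnorm_le_enorm k (v : 'cV[R]_k) : `|v| <= enorm v.
Proof.
apply: mxnorm_le; first exact: sqrtr_ge0.
move=> i j; rewrite ord1 -sqrtr_sqr /enorm ler_wsqrtr //.
rewrite (bigD1 i) //= lerDl; apply: sumr_ge0 => l _; exact: sqr_ge0.
Qed.

Lemma enorm_le_mxnorm k (v : 'cV[R]_k) : enorm v <= k%:R * `|v|.
Proof.
have nv0 : 0 <= `|v| by [].
rewrite /enorm -[X in _ <= X]ger0_norm ?mulr_ge0 // -sqrtr_sqr ler_wsqrtr //.
apply: (@le_trans _ _ (\sum_(i < k) `|v| ^+ 2)).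
  apply: ler_sum => i _; rewrite -real_normK ?num_real //.
  by rewrite lerXn2r ?nnegrE // mxnorm_entry.
rewrite sumr_const card_ord exprMn -[_ *+ k]mulr_natl.
rewrite ler_wpM2r ?sqr_ge0 //.
case: k {v nv0} => [|k]; first by rewrite expr0n.
by rewrite expr2 ler_peMl // ler1n.
Qed.

Lemma enorm_ge0 k (v : 'cV[R]_k) : 0 <= enorm v.
Proof. exact: sqrtr_ge0. Qed.

Lemma mulmx_norm a b (M : 'M[R]_(a, b)) (v : 'cV[R]_b) :
  `|M *m v| <= (\sum_i \sum_j `|M i j|) * `|v|.
Proof.
apply: mxnorm_le; first by rewrite mulr_ge0 // sumr_ge0 // => i _; rewrite sumr_ge0.
move=> i j; rewrite ord1 mxE.
apply: (le_trans (ler_norm_sum _ _ _)).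
apply: (@le_trans _ _ ((\sum_j `|M i j|) * `|v|)).
  rewrite mulr_suml; apply: ler_sum => l _; rewrite normrM ler_wpM2l //.
  exact: mxnorm_entry.
rewrite ler_wpM2r //; rewrite (bigD1 i) //= lerDl sumr_ge0 // => l _.
by rewrite sumr_ge0.
Qed.

End MxNorm.
Section Cont.
Variable R : realType.

Lemma near_eps (V : normedModType R) (x : V) (P : V -> Prop) :
  (\forall y \near x, P y) -> exists2 d : R, 0 < d & forall y, `|x - y| < d -> P y.
Proof. by rewrite nbhs_normP => -[d d0 H]; exists d => // y /H. Qed.

Lemma eps_near (V : normedModType R) (x : V) (P : V -> Prop) (d : R) : 0 < d ->
  (forall y, `|x - y| < d -> P y) -> \forall y \near x, P y.
Proof. by move=> d0 H; apply/nbhs_normP; exists d => // y /H. Qed.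

Lemma cont_at_eps (V W : normedModType R) (f : V -> W) x :
  (forall e, 0 < e -> exists2 d : R, 0 < d &
     forall y, `|x - y| < d -> `|f x - f y| < e) -> {for x, continuous f}.
Proof.
move=> H; apply/cvgrPdist_lt => e e0; have [d d0 Hd] := H e e0.
exact: eps_near d0 Hd.
Qed.

Lemma cont_eps (V W : normedModType R) (f : V -> W) x :
  {for x, continuous f} -> forall e, 0 < e -> exists2 d : R, 0 < d &
     forall y, `|x - y| < d -> `|f x - f y| < e.
Proof. by move=> /cvgrPdist_lt H e e0; exact: near_eps (H e e0). Qed.

Lemma lipschitz_cont (V W : normedModType R) (h : V -> W) (K : R) :
  (forall y z, `|h y - h z| <= K * `|y - z|) -> continuous h.
Proof.
move=> H x; apply: cont_at_eps => e e0.
exists (e / (`|K| + 1)); first by rewrite divr_gt0 // ltr_wpDl.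
move=> y xy; apply: (le_lt_trans (H x y)).
apply: (le_lt_trans (ler_wpM2r _ (ler_norm K))) => //.
have K1 : 0 < `|K| + 1 by rewrite ltr_wpDl.
have : `|K| * `|x - y| <= `|K| * (e / (`|K| + 1)) by rewrite ler_wpM2l // ltW.
move/le_lt_trans; apply; rewrite mulrA ltr_pdivrMr // mulrDr mulr1.
by rewrite mulrC ltrDl.
Qed.

Lemma sum_cont (V : normedModType R) (I : finType) (f : I -> V -> R) :
  (forall i, continuous (f i)) -> continuous (fun x => \sum_i f i x).
Proof.
move=> H; rewrite /index_enum; elim: (Finite.enum I) => [|i r IH].
  have -> : (fun x => \sum_(i <- [::]) f i x) = fun=> 0.
    by apply: funext => y; rewrite big_nil.
  exact: cst_continuous.
have -> : (fun x => \sum_(j <- i :: r) f j x) = (f i) + (fun x => \sum_(j <- r) f j x).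
  by apply: funext => y; rewrite big_cons.
by move=> x; apply: continuousD; [exact: H | exact: IH].
Qed.

End Cont.
Section Compact.
Variable R : realType.

Lemma trmx_cont a b : continuous (@trmx R a b).
Proof.
apply: (@lipschitz_cont _ _ _ _ 1) => M N; rewrite mul1r.
apply: mxnorm_le => // i j.
have -> : (M^T - N^T) i j = (M - N) j i by rewrite !mxE.
exact: mxnorm_entry.
Qed.

Lemma cbox_compact k (r : R) : compact [set u : 'cV[R]_k | forall i, `|u i 0| <= r].
Proof.
have -> : [set u : 'cV[R]_k | forall i, `|u i 0| <= r] =
    trmx @` [set v : 'rV[R]_k | forall i, (`[- r, r]%classic : set R) (v ord0 i)].
  apply/seteqP; split => [u /= Hu|_ [v /= Hv <-] i].
    exists u^T; last by rewrite trmxK.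
    by move=> i; rewrite /= mxE in_itv /= -ler_norml; apply: Hu.
  by have := Hv i; rewrite /= in_itv /= -ler_norml mxE (_ : 0 = ord0) // ?ord1.
apply: (@continuous_compact _ _ (@trmx R 1 k)).
  by apply: continuous_subspaceT => x; exact: trmx_cont.
apply: (@rV_compact R k (fun=> `[- r, r]%classic)) => i; exact: segment_compact.
Qed.

Lemma coercive_min k (f : 'cV[R]_k -> R) : continuous f ->
  (forall M, exists r, forall u, r <= `|u| -> M <= f u) ->
  exists u0, forall u, f u0 <= f u.
Proof.
move=> fc fco; have [r Hr] := fco (f 0 + 1).
set K := [set u : 'cV[R]_k | forall i, `|u i 0| <= `|r|].
have K0 : K !=set0 by exists 0 => i; rewrite mxE normr0.
have [c cK Hc] := compact_EVT_min K0 (@cbox_compact k `|r|)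
  (continuous_subspaceT fc).
exists c => u; have [ru|ur] := leP r `|u|.
  apply: (le_trans _ (Hr u ru)); apply: (le_trans (Hc 0 _)); last by rewrite lerDl.
  by apply/mem_set => i; rewrite mxE normr0.
apply: Hc; apply/mem_set => i; apply: (le_trans (mxnorm_entry _ _ _)).
by apply: (le_trans (ltW ur)); exact: ler_norm.
Qed.

End Compact.

Section PP.
Variable R : realType.

Lemma pp_lip (x y : R) : `|Num.max x 0 - Num.max y 0| <= `|x - y|.
Proof.
case: (leP x 0) => hx; case: (leP y 0) => hy.
- by rewrite subrr normr0.
- rewrite distrC subr0 (gtr0_norm hy) ltr0_norm; [lra | lra].
- rewrite subr0 (gtr0_norm hx) gtr0_norm; [lra | lra].
- by [].
Qed.

Lemma sq_cont (V : normedModType R) (f : V -> R) : continuous f ->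
  continuous (fun x => f x ^+ 2).
Proof.
move=> fc; have -> : (fun x => f x ^+ 2) = f * f by apply: funext => x; rewrite expr2.
by move=> x; apply: continuousM; exact: fc.
Qed.

Lemma h_cont (c : R) : continuous (fun z : R => Num.max (z - c) 0 ^+ 2).
Proof.
apply: (@sq_cont R (fun z : R => Num.max (z - c) 0)).
apply: (@lipschitz_cont _ _ _ _ 1) => y z; rewrite mul1r.
by apply: (le_trans (pp_lip _ _)); rewrite opprB addrA subrK.
Qed.

Lemma bigmin_seq_le (I : eqType) (s : seq I) (F : I -> R) j : j \in s ->
  \big[Num.min/1]_(i <- s) F i <= F j.
Proof.
elim: s => [//|i s IH]; rewrite inE big_cons => /orP[/eqP<-|/IH H].
  by rewrite ge_min lexx.
by rewrite ge_min H orbT.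
Qed.

End PP.
Section Simplex.
Variable R : realType.

Lemma simplex_closed N : closed (simplex (R:=R) N).
Proof.
have -> : simplex N = (\bigcap_(a in [set: 'I_N]) [set p : 'cV[R]_N | 0 <= p a 0])
    `&` [set p | \sum_a p a 0 = 1].
  apply/seteqP; split => p; rewrite /simplex /=.
    by case=> H1 H2; split => //; hnf => a _; exact: H1.
  by case=> H1 H2; split => // a; apply: H1.
apply: closedI.
  apply: closed_bigI => a _.
  apply: (@preimage_closed _ _ (fun p : 'cV[R]_N => p a 0) [set x | 0 <= x]).
    by move=> p _; exact: coord_continuous.
  exact: closed_ge.
apply: (@preimage_closed _ _ (fun p : 'cV[R]_N => \sum_a p a 0) [set x | x = 1]).
  move=> p _; apply: (@sum_cont _ _ _ (fun a (p : 'cV[R]_N) => p a 0)) => a.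
  exact: coord_continuous.
exact: closed_eq.
Qed.

Lemma simplex_compact N : compact (simplex (R:=R) N).
Proof.
have cb := @cbox_compact R N 1; have cl := @simplex_closed N.
apply: (subclosed_compact cl cb).
move=> p [H1 H2] a; rewrite ger0_norm // -H2 (bigD1 a) //= lerDl.
by apply: sumr_ge0 => b _.
Qed.

Lemma dot_cont N (v : 'I_N -> R) : continuous (fun p : 'cV[R]_N => \sum_a p a 0 * v a).
Proof.
apply: (@sum_cont _ _ _ (fun a (p : 'cV[R]_N) => p a 0 * v a)) => a p.
apply: continuousM; first exact: coord_continuous.
exact: cst_continuous.
Qed.

End Simplex.

Section Minimax.
Variables (R : realType) (N m : nat) (V : 'I_N -> 'cV[R]_m -> R) (a0 : 'I_N).
Hypothesis Vconv : forall a, convex_fun (V a).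
Hypothesis Vcont : forall a, continuous (V a).
Hypothesis Vcoer : forall M, exists r, forall u, r <= `|u| -> forall a, M <= V a u.

Definition Fm u := \big[Num.max/V a0 u]_a V a u.

Lemma Fm_ge a u : V a u <= Fm u.
Proof. exact: le_bigmax. Qed.

Lemma Fm_att u : exists a, Fm u = V a u.
Proof.
rewrite /Fm; elim/big_ind: _ => [|x y [a ->] [b ->]|a _]; first by exists a0.
  by case: (leP (V a u) (V b u)) => _; [exists b | exists a].
by exists a.
Qed.

Lemma Fm_cont : continuous Fm.
Proof.
move=> x; apply: cont_at_eps => e e0.
have Ha : forall a, \forall y \near x, `|V a x - V a y| < e.
  by move=> a; move: (@Vcont a x) => /cvgrPdist_lt /(_ e e0).
have : \forall y \near x, forall a, `|V a x - V a y| < e.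
  exact: (@filter_forall _ _ (fun a y => `|V a x - V a y| < e) _ _ Ha).
move/near_eps => [d d0 Hd]; exists d => // y /Hd H.
have [ax Hx] := Fm_att x; have [ay Hy] := Fm_att y.
move: (H ax) (H ay); rewrite !ltr_norml => /andP[h1 h2] /andP[h3 h4].
have g1 := Fm_ge ay x; have g2 := Fm_ge ax y.
rewrite Hx Hy; rewrite Hx in g1; rewrite Hy in g2.
apply/andP; split; lra.
Qed.

Lemma Fm_coer M : exists r, forall u, r <= `|u| -> M <= Fm u.
Proof.
have [r Hr] := Vcoer M; exists r => u /Hr /(_ a0) H.
exact: le_trans H (Fm_ge a0 u).
Qed.

Lemma Fm_min : exists u0, forall u, Fm u0 <= Fm u.
Proof. exact: coercive_min Fm_cont Fm_coer. Qed.

Lemma pp_sq_le (z y : R) : z <= y -> Num.max z 0 ^+ 2 <= y ^+ 2.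
Proof.
case: (leP z 0) => hz zy; first by rewrite expr0n /= sqr_ge0.
by rewrite lerXn2r ?nnegrE ?(ltW hz) // (le_trans (ltW hz) zy).
Qed.

Lemma eps_dual u0 : (forall u, Fm u0 <= Fm u) -> forall e, 0 < e ->
  exists p : 'cV[R]_N, simplex N p /\ forall u, Fm u0 - e <= \sum_a p a 0 * V a u.
Proof.
move=> Hu0 e e0; set c := Fm u0 - e.
pose gf u := \sum_a Num.max (V a u - c) 0 ^+ 2.
have gfc : continuous gf.
  apply: sum_cont => a x.
  exact: (continuous_comp (@Vcont a x) (@h_cont R c (V a x))).
have gfco : forall M, exists r, forall u, r <= `|u| -> M <= gf u.
  move=> M; have [r Hr] := Vcoer (c + Num.max M 1); exists r => u /Hr /(_ a0) H.
  have m1 : 1 <= Num.max M 1 by rewrite le_max lexx orbT.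
  have mM : M <= Num.max M 1 by rewrite le_max lexx.
  have H1 : Num.max M 1 <= V a0 u - c by lra.
  rewrite /gf (bigD1 a0) //=.
  apply: (@le_trans _ _ (Num.max (V a0 u - c) 0 ^+ 2)); last first.
    rewrite lerDl; apply: sumr_ge0 => a _; exact: sqr_ge0.
  rewrite max_l; last by lra.
  nra.
have [u1 Hu1] := coercive_min gfc gfco.
pose r a := Num.max (V a u1 - c) 0.
have r0 a : 0 <= r a by rewrite le_max lexx orbT.
have rge a : V a u1 - c <= r a by rewrite le_max lexx.
have Sr : 0 < \sum_a r a.
  have [a' Ha'] := Fm_att u1.
  have ha : 0 < V a' u1 - c.
    rewrite ltNge; apply/negP => Hle.
    have := Hu0 u1; rewrite Ha'; have hc : c = Fm u0 - e by []; lra.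
  apply: (@lt_le_trans _ _ (r a')); first by rewrite /r max_l ?ltW.
  rewrite (bigD1 a') //= lerDl sumr_ge0 //.
have key : forall u, \sum_a r a ^+ 2 <= \sum_a r a * (V a u - c).
  move=> u.
  pose d a := V a u - c - r a.
  set S := \sum_a r a * d a; set D := \sum_a d a ^+ 2.
  have ineq : forall t, 0 < t -> t <= 1 -> 0 <= 2 * S + t * D.
    move=> t t0 t1.
    have H1 : gf u1 <= gf (t *: u + (1 - t) *: u1) := Hu1 _.
    have H2 : gf (t *: u + (1 - t) *: u1) <= \sum_a (r a + t * d a) ^+ 2.
      apply: ler_sum => a _; apply: pp_sq_le.
      have cv := @Vconv a u u1 t (ltac:(apply/andP; split; [exact: ltW|exact: t1])).
      have := rge a; rewrite /d; nra.
    have H3 : \sum_a (r a + t * d a) ^+ 2 =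
        \sum_a r a ^+ 2 + t * (2 * S) + t ^+ 2 * D.
      rewrite /S /D !mulr_sumr -!big_split /=; apply: eq_bigr => a _; ring.
    have H4 : gf u1 = \sum_a r a ^+ 2 by [].
    have : 0 <= t * (2 * S + t * D) by nra.
    by rewrite pmulr_rge0.
  have S0 : 0 <= S.
    rewrite leNgt; apply/negP => Sneg.
    have D0 : 0 <= D by apply: sumr_ge0 => a _; exact: sqr_ge0.
    have D1 : 0 < D + 1 by lra.
    pose t := Num.min 1 (- S / (D + 1)).
    have t0 : 0 < t by rewrite lt_min ltr01 /= divr_gt0 // oppr_gt0.
    have t1 : t <= 1 by rewrite ge_min lexx.
    have t2 : t <= - S / (D + 1) by rewrite ge_min lexx orbT.
    have tD : t * D <= - S.
      apply: (@le_trans _ _ (t * (D + 1))); first by rewrite ler_wpM2l ?ltW //; lra.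
      by rewrite -ler_pdivlMr.
    have := ineq t t0 t1; lra.
  have : \sum_a r a * (V a u - c) = \sum_a r a ^+ 2 + S.
    rewrite /S -big_split; apply: eq_bigr => a _; rewrite /d /=.
    by rewrite mulrBr expr2; lra.
  lra.
set Z := \sum_a r a.
exists (\col_a (r a / Z)); split.
  split => [a|]; first by rewrite mxE divr_ge0 // ltW.
  under eq_bigr do rewrite mxE.
  by rewrite -mulr_suml divff // gt_eqF.
move=> u; under eq_bigr do rewrite mxE.
have := key u.
have e1 : \sum_a r a / Z * V a u = (\sum_a r a * V a u) / Z.
  by rewrite mulr_suml; apply: eq_bigr => a _; rewrite mulrAC.
have e2 : \sum_a r a * (V a u - c) = \sum_a r a * V a u - c * Z.
  by rewrite /Z mulr_sumr -sumrB; apply: eq_bigr => a _; ring.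
have sq0 : 0 <= \sum_a r a ^+ 2 by apply: sumr_ge0 => a _; exact: sqr_ge0.
rewrite e1 e2 ler_pdivlMr //; rewrite -/c; lra.
Qed.

Theorem minimax : exists u0 (p : 'cV[R]_N), simplex N p /\
  (forall u, Fm u0 <= Fm u) /\ (forall u, Fm u0 <= \sum_a p a 0 * V a u).
Proof.
have [u0 Hu0] := Fm_min.
have := @simplex_compact R N; rewrite compact_In0 /=.
move=> /(_ ('cV[R]_m * R)%type [set i | 0 < i.2]
   (fun i => simplex N `&` [set p | Fm u0 - i.2 <= \sum_a p a 0 * V a i.1])).
case.
- exists (fun i => [set p : 'cV[R]_N | Fm u0 - i.2 <= \sum_a p a 0 * V a i.1]) => // i _.
  apply: (@preimage_closed _ _ (fun p : 'cV[R]_N => \sum_a p a 0 * V a i.1)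
     [set x | Fm u0 - i.2 <= x]); last exact: closed_ge.
  by move=> p _; exact: (@dot_cont R N (fun a => V a i.1) p).
- move=> D' HD'; pose emin := \big[Num.min/1]_(i <- finmap.enum_fset D') i.2.
  have emin0 : 0 < emin.
    rewrite /emin big_seq; elim/big_ind: _ => //.
      by move=> x y hx hy; rewrite lt_min hx hy.
    by move=> i /HD'; rewrite in_setE.
  have [p [pS Hpp]] := eps_dual Hu0 emin0.
  exists p => i /= iD'; split => //.
  apply: le_trans (Hpp i.1); rewrite lerB //.
  exact: (bigmin_seq_le (fun i : 'cV[R]_m * R => i.2) iD').
- move=> p Hp; exists u0, p.
  split; first by have [] := Hp (0, 1) ltr01.
  split => // u; apply/ler_addgt0Pr => e e0.
  have [_ /= h] := Hp (u, e) e0; lra.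
Qed.

End Minimax.

Section ConvCont.
Variable R : realType.

Lemma convex_cont_dom k (f : 'cV[R]_k -> R) : convex_fun f ->
  (forall x, exists h : 'cV[R]_k -> R,
     {for x, continuous h} /\ h x = f x /\ (forall y, f y <= h y)) ->
  continuous f.
Proof.
move=> fc H x; apply: cont_at_eps => e e0.
have [h [hc [hx hle]]] := H x.
have [d d0 Hd] := cont_eps hc ltr01.
have fb : forall z, `|x - z| < d -> f z < f x + 1.
  move=> z /Hd; rewrite -hx ltr_norml => /andP[h1 h2].
  by apply: (le_lt_trans (hle z)); lra.
pose t := Num.min e 1 / 2.
have tdef : t = Num.min e 1 / 2 by [].
have m1 : Num.min e 1 <= e by rewrite ge_min lexx.
have m2 : Num.min e 1 <= 1 by rewrite ge_min lexx orbT.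
have m0 : 0 < Num.min e 1 by rewrite lt_min e0 ltr01.
have t0 : 0 < t by lra.
have te : t < e by lra.
have t1 : t < 1 by lra.
exists (t * d); first by rewrite mulr_gt0.
move=> y xy.
set hv := y - x.
have nh : `|hv| < t * d by rewrite /hv distrC.
have tn : t^-1 * `|hv| < d by rewrite ltr_pdivrMl.
have tinv : `|x - (x + t^-1 *: hv)| < d.
  by rewrite opprD addrA subrr sub0r normrN normrZ ger0_norm ?invr_ge0 ?ltW.
have tinv2 : `|x - (x - t^-1 *: hv)| < d.
  by rewrite opprB addrCA subrr addr0 normrZ ger0_norm ?invr_ge0 ?ltW.
have tn0 : t != 0 by rewrite gt_eqF.
have e1 : y = t *: (x + t^-1 *: hv) + (1 - t) *: x.
  apply/matrixP => i j; rewrite /hv !mxE; field; exact: tn0.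
have up : f y < f x + t.
  have := fc (x + t^-1 *: hv) x t.
  rewrite -e1 => /(_ (ltac:(apply/andP; split; lra))) hc1.
  have hb := fb _ tinv.
  have : t * f (x + t^-1 *: hv) < t * (f x + 1) by rewrite ltr_pM2l.
  lra.
have t10 : 1 + t != 0 by rewrite gt_eqF //; lra.
have e2 : x = (1 + t)^-1 *: y + (1 - (1 + t)^-1) *: (x - t^-1 *: hv).
  apply/matrixP => i j; rewrite /hv !mxE; field.
  by apply/andP; split.
have low : f x < f y + t.
  pose l := (1 + t)^-1.
  have l0 : 0 < l by rewrite invr_gt0; lra.
  have l1 : l < 1 by rewrite invf_lt1; lra.
  have := fc y (x - t^-1 *: hv) l.
  rewrite -e2 => /(_ (ltac:(apply/andP; split; lra))) hc2.
  have hb := fb _ tinv2.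
  have s1 : (1 - l) * f (x - t^-1 *: hv) < (1 - l) * (f x + 1).
    by rewrite ltr_pM2l //; lra.
  have H' : f x < l * f y + (1 - l) * (f x + 1) by lra.
  have : (1 + t) * f x < (1 + t) * (l * f y + (1 - l) * (f x + 1)).
    by rewrite ltr_pM2l //; lra.
  have -> : (1 + t) * (l * f y + (1 - l) * (f x + 1)) = f y + t * (f x + 1).
    by rewrite /l; field.
  lra.
by rewrite ltr_norml; apply/andP; split; lra.
Qed.

End ConvCont.
Section CF.
Variables (R : realType) (V : normedModType R).
Lemma cont_addf (f h : V -> R) : continuous f -> continuous h ->
  continuous (fun x => f x + h x).
Proof. by move=> fc hc x; apply: continuousD; [exact: fc | exact: hc]. Qed.
Lemma cont_subc (f : V -> R) c : continuous f -> continuous (fun x => f x - c).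
Proof. by move=> fc x; apply: continuousB; [exact: fc | exact: cst_continuous]. Qed.
Lemma cont_addc (f : V -> R) c : continuous f -> continuous (fun x => f x + c).
Proof. by move=> fc x; apply: continuousD; [exact: fc | exact: cst_continuous]. Qed.
Lemma cont_mulc (f : V -> R) c : continuous f -> continuous (fun x => c * f x).
Proof. by move=> fc x; apply: continuousM; [exact: cst_continuous | exact: fc]. Qed.
End CF.

Section Sups.
Variable R : realType.

Lemma bigmax_att (I : finType) (F : I -> R) i0 :
  exists i, \big[Num.max/F i0]_i F i = F i.
Proof.
elim/big_ind: _ => [|x y [a ->] [b ->]|a _]; first by exists i0.
  by case: (leP (F a) (F b)) => _; [exists b | exists a].
by exists a.
Qed.

Lemma dot_le_max N (p v : 'cV[R]_N) a0 : simplex N p ->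
  dotv p v <= \big[Num.max/v a0 0]_a v a 0.
Proof.
move=> [p0 p1]; rewrite /dotv.
apply: (@le_trans _ _ (\sum_a p a 0 * \big[Num.max/v a0 0]_a v a 0)).
  apply: ler_sum => a _; rewrite ler_wpM2l //.
  exact: (le_bigmax _ (fun a => v a 0)).
by rewrite -mulr_suml p1 mul1r.
Qed.

Lemma sup_simplex N (v : 'cV[R]_N) a0 :
  ereal_sup [set (dotv p v)%:E | p in simplex N] =
  (\big[Num.max/v a0 0]_a v a 0)%:E.
Proof.
have [a' Ha'] := bigmax_att (fun a => v a 0) a0.
apply/le_anti/andP; split.
  apply: ge_ereal_sup => _ [p hp <-]; rewrite lee_fin; exact: dot_le_max.
apply: le_ereal_sup_tmp; exists (dotv (\col_a (a == a')%:R) v)%:E.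
  exists (\col_a (a == a')%:R) => //; split => [a|]; first by rewrite mxE ler0n.
  under eq_bigr do rewrite mxE.
  rewrite (bigD1 a') //= eqxx big1 ?addr0 // => a /negbTE -> //.
rewrite lee_fin Ha' /dotv (bigD1 a') //= mxE eqxx mul1r big1 ?addr0 //.
by move=> a /negbTE; rewrite mxE => ->; rewrite mul0r.
Qed.

Lemma inf_attained (T : Type) (f : T -> R) (D : set T) x0 : D x0 ->
  (forall x, D x -> f x0 <= f x) -> ereal_inf [set (f x)%:E | x in D] = (f x0)%:E.
Proof.
move=> Dx0 H; apply/le_anti/andP; split.
  by apply: ereal_inf_lbound; exists x0.
by apply: le_ereal_inf_tmp => _ [x Dx <-]; rewrite lee_fin H.
Qed.

End Sups.

Section Stage.
Variables (R : realType) (n m nF N : nat) (A : nat -> 'M[R]_n)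
  (B : nat -> 'M[R]_(n, m)) (P : nat -> 'I_N -> 'I_nF -> 'I_nF -> R)
  (q : nat -> 'I_nF -> R) (sig : nat -> 'cV[R]_n -> 'cV[R]_m -> R)
  (g : nat -> 'I_N -> 'I_nF -> R).
Hypothesis N0 : (0 < N)%N.
Hypothesis P0 : forall t a j i, 0 <= P t a j i.
Hypothesis P1 : forall t a j, \sum_i P t a j i = 1.
Hypothesis q01 : forall t i, 0 <= q t i <= 1.
Variable t : nat.
Variables (e0 d0 : R) (al be : R -> R).
Hypothesis al_inf : tends_to_infty al.
Hypothesis al_ge : forall y, 0 <= y -> e0 <= al y.
Hypothesis be_ge : forall y, 0 <= y -> d0 <= be y.
Hypothesis sig_ge : forall x u, al (enorm u) + be (enorm x) <= sig t x u.
Hypothesis sig_conv : jointly_convex (sig t).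
Hypothesis sig_ucx : unif_cont_in_x (sig t).
Hypothesis sig_cu : forall x, continuous (sig t x).
Variable W : 'cV[R]_n -> 'I_nF -> R.
Hypothesis W_conv : forall i, convex_fun (fun x => W x i).
Hypothesis W_cont : forall i, continuous (fun x => W x i).
Variable L : R.
Hypothesis W_lb : forall x i, L <= W x i.

Definition a00 : 'I_N := Ordinal N0.
Definition VV x s a u := (Vvec A B P q sig g t W x s u) a 0.

Lemma VV_E x s a u : VV x s a u = sig t x u - g t a s +
  \sum_i P t a s i * (q t i * W (A t *m x + B t *m u) i
                      + (1 - q t i) * W (A t *m x) i).
Proof. by rewrite /VV /Vvec mxE. Qed.

Lemma affine_lin k (M1 : 'M[R]_(n, k)) (M2 : 'M[R]_(n, m)) (x1 x2 : 'cV[R]_k)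
  (u1 u2 : 'cV[R]_m) (l : R) :
  M1 *m (l *: x1 + (1 - l) *: x2) + M2 *m (l *: u1 + (1 - l) *: u2) =
  l *: (M1 *m x1 + M2 *m u1) + (1 - l) *: (M1 *m x2 + M2 *m u2).
Proof. by rewrite !mulmxDr -!scalemxAr !scalerDr addrACA. Qed.

Lemma VV_jconv s a x1 x2 u1 u2 l : 0 <= l <= 1 ->
  VV (l *: x1 + (1 - l) *: x2) s a (l *: u1 + (1 - l) *: u2)
  <= l * VV x1 s a u1 + (1 - l) * VV x2 s a u2.
Proof.
move=> hl; rewrite !VV_E.
have hs := sig_conv x1 x2 u1 u2 hl.
have [hl0 hl1] := andP hl.
set S1 := \sum_i _; set S2 := \sum_i _; set S3 := \sum_i _.
have hW : S1 <= l * S2 + (1 - l) * S3.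
  rewrite /S1 /S2 /S3 !mulr_sumr -big_split /=; apply: ler_sum => i _.
  rewrite affine_lin.
  have h1 := @W_conv i (A t *m x1 + B t *m u1) (A t *m x2 + B t *m u2) l hl.
  have h2 : W (A t *m (l *: x1 + (1 - l) *: x2)) i <=
      l * W (A t *m x1) i + (1 - l) * W (A t *m x2) i.
    by rewrite mulmxDr -!scalemxAr; exact: (@W_conv i).
  have hP := P0 t a s i; have [hq0 hq1] := andP (q01 t i).
  have hq2 : 0 <= 1 - q t i by rewrite subr_ge0.
  have h3 := lerD (ler_wpM2l hq0 h1) (ler_wpM2l hq2 h2).
  have h4 := ler_wpM2l hP h3.
  apply: (le_trans h4); rewrite le_eqVlt; apply/orP; left; apply/eqP; ring.
lra.
Qed.

Lemma W_lip_cont k (h : 'cV[R]_k -> 'cV[R]_n) (K : R) i :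
  (forall y z, `|h y - h z| <= K * `|y - z|) -> continuous (fun y => W (h y) i).
Proof.
move=> Hh y; have hc := @lipschitz_cont R _ _ h K Hh y.
exact: (continuous_comp hc (@W_cont i (h y))).
Qed.

Lemma mul_lip k (M : 'M[R]_(n, k)) (c : 'cV[R]_n) (y z : 'cV[R]_k) :
  `|(M *m y + c) - (M *m z + c)| <= (\sum_i \sum_j `|M i j|) * `|y - z|.
Proof.
by rewrite opprD addrACA subrr addr0 -mulmxBr; exact: mulmx_norm.
Qed.

Lemma mul_lip2 k (M : 'M[R]_(n, k)) (c : 'cV[R]_n) (y z : 'cV[R]_k) :
  `|(c + M *m y) - (c + M *m z)| <= (\sum_i \sum_j `|M i j|) * `|y - z|.
Proof.
by rewrite opprD addrACA subrr add0r -mulmxBr; exact: mulmx_norm.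
Qed.

Lemma mul_lip0 k (M : 'M[R]_(n, k)) (y z : 'cV[R]_k) :
  `|(M *m y) - (M *m z)| <= (\sum_i \sum_j `|M i j|) * `|y - z|.
Proof. by rewrite -mulmxBr; exact: mulmx_norm. Qed.

Lemma VV_cont_u x s a : continuous (VV x s a).
Proof.
have -> : VV x s a = fun u => sig t x u - g t a s +
  \sum_i P t a s i * (q t i * W (A t *m x + B t *m u) i
                      + (1 - q t i) * W (A t *m x) i).
  by apply: funext => u; rewrite VV_E.
apply: cont_addf; first by apply: cont_subc; exact: sig_cu.
apply: (@sum_cont R _ _ (fun i v => P t a s i * (q t i * W (A t *m x + B t *m v) i
                      + (1 - q t i) * W (A t *m x) i))) => i.
apply: cont_mulc; apply: cont_addc; apply: cont_mulc.
exact: (@W_lip_cont m (fun v => A t *m x + B t *m v) _ i (mul_lip2 (B t) (A t *m x))).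
Qed.

Lemma sig_cont_x u : continuous (fun x => sig t x u).
Proof.
move=> x; apply: cont_at_eps => e e0'.
have [d [dp Hd]] := sig_ucx x e0'.
exists (d / (n%:R + 1)); first by rewrite divr_gt0 // ltr_wpDl.
move=> y xy; rewrite distrC; apply: Hd.
apply: (le_lt_trans (enorm_le_mxnorm _)); rewrite distrC.
have n1 : 0 < n%:R + 1 :> R by rewrite ltr_wpDl.
apply: (@le_lt_trans _ _ (n%:R * (d / (n%:R + 1)))).
  by rewrite ler_wpM2l // ltW.
rewrite mulrA ltr_pdivrMr // mulrC ltr_pM2l //; lra.
Qed.

Lemma VV_cont_x s a u : continuous (fun x => VV x s a u).
Proof.
have -> : (fun x => VV x s a u) = fun x => sig t x u - g t a s +
  \sum_i P t a s i * (q t i * W (A t *m x + B t *m u) i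
                      + (1 - q t i) * W (A t *m x) i).
  by apply: funext => x; rewrite VV_E.
apply: cont_addf; first by apply: cont_subc; exact: sig_cont_x.
apply: (@sum_cont R _ _ (fun i v => P t a s i * (q t i * W (A t *m v + B t *m u) i
                      + (1 - q t i) * W (A t *m v) i))) => i.
apply: cont_mulc; apply: cont_addf; apply: cont_mulc.
  exact: (@W_lip_cont n (fun v => A t *m v + B t *m u) _ i (mul_lip (A t) (B t *m u))).
exact: (@W_lip_cont n (fun v => A t *m v) _ i (mul_lip0 (A t))).
Qed.

Lemma VV_lb x s a u : al (enorm u) + be (enorm x) - g t a s + L <= VV x s a u.
Proof.
rewrite VV_E; have h1 := sig_ge x u.
have h2 : L <= \sum_i P t a s i * (q t i * W (A t *m x + B t *m u) i
                      + (1 - q t i) * W (A t *m x) i).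
  rewrite -[L]mul1r -{1}(P1 t a s) mulr_suml; apply: ler_sum => i _.
  rewrite ler_wpM2l //; have [hq0 hq1] := andP (q01 t i).
  have := W_lb (A t *m x + B t *m u) i; have := W_lb (A t *m x) i; nra.
lra.
Qed.

Lemma VV_coer x s M : exists r, forall u, r <= `|u| -> forall a, M <= VV x s a u.
Proof.
set G := \sum_a `|g t a s|.
have [y0 Hy] := al_inf (M - be (enorm x) + G - L).
exists y0 => u hu a.
have h1 := Hy (enorm u) (le_trans hu (mxnorm_le_enorm u)).
have h2 : g t a s <= G.
  apply: (le_trans (ler_norm _)); rewrite /G (bigD1 a) //= lerDl.
  by apply: sumr_ge0.
have := VV_lb x s a u; lra.
Qed.

Lemma VV_conv_u x s a : convex_fun (VV x s a).
Proof.
move=> u1 u2 l hl; have := VV_jconv s a x x u1 u2 hl.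
by rewrite -scalerDl addrC subrK scale1r.
Qed.

Lemma stage_main x s : exists u0 (p : 'cV[R]_N), simplex N p /\
  infsup A B P q sig g t W x s = (Fm (VV x s) a00 u0)%:E /\
  supinf A B P q sig g t W x s = (Fm (VV x s) a00 u0)%:E /\
  (forall u, Fm (VV x s) a00 u0 <= Fm (VV x s) a00 u) /\
  (forall u, Fm (VV x s) a00 u0 <= dotv p (Vvec A B P q sig g t W x s u)).
Proof.
have [u0 [p [pS [Hmin Hp]]]] := minimax a00 (VV_conv_u x s) (fun a => @VV_cont_u x s a)
  (VV_coer x s).
exists u0, p; split => //.
have Hsup u : ereal_sup [set (dotv p' (Vvec A B P q sig g t W x s u))%:E
    | p' in simplex N] = (Fm (VV x s) a00 u)%:E.
  exact: sup_simplex.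
split.
  rewrite /infsup; under eq_imagel do rewrite Hsup.
  exact: inf_attained.
split => //; rewrite /supinf.
apply/le_anti/andP; split.
  apply: ge_ereal_sup => _ [p' hp' <-].
  apply: ge_ereal_inf; exists (dotv p' (Vvec A B P q sig g t W x s u0))%:E.
    by exists u0.
  by rewrite lee_fin; exact: dot_le_max.
apply: le_ereal_sup_tmp.
exists (ereal_inf [set (dotv p (Vvec A B P q sig g t W x s u))%:E | u in [set: 'cV_m]]).
  by exists p.
by apply: le_ereal_inf_tmp => _ [u _ <-]; rewrite lee_fin; exact: Hp.
Qed.

Definition Vn x s := fine (infsup A B P q sig g t W x s).

Lemma Vn_val x s : exists u0, Vn x s = Fm (VV x s) a00 u0 /\
  forall u, Vn x s <= Fm (VV x s) a00 u.
Proof.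
have [u0 [p [_ [hi [_ [hm _]]]]]] := stage_main x s.
by exists u0; rewrite /Vn hi /=; split.
Qed.

Lemma Vn_lb x s : e0 + d0 - \sum_a \sum_j `|g t a j| + L <= Vn x s.
Proof.
have [u0 [-> _]] := Vn_val x s.
apply: le_trans (Fm_ge _ a00 a00 u0).
have h1 := VV_lb x s a00 u0.
have h2 := al_ge (enorm_ge0 u0); have h3 := be_ge (enorm_ge0 x).
have h4 : g t a00 s <= \sum_a \sum_j `|g t a j|.
  apply: (le_trans (ler_norm _)); rewrite (bigD1 a00) //= (bigD1 s) //=.
  rewrite -addrA lerDl addr_ge0 //; first by apply: sumr_ge0.
  by apply: sumr_ge0 => a _; apply: sumr_ge0.
lra.
Qed.

Lemma Vn_conv s : convex_fun (fun x => Vn x s).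
Proof.
move=> x1 x2 l hl; have [hl0 hl1] := andP hl.
have [u1 [e1 _]] := Vn_val x1 s; have [u2 [e2 _]] := Vn_val x2 s.
have [_ [_ H]] := Vn_val (l *: x1 + (1 - l) *: x2) s.
apply: (le_trans (H (l *: u1 + (1 - l) *: u2))).
have [a' ->] := Fm_att (VV (l *: x1 + (1 - l) *: x2) s) a00 (l *: u1 + (1 - l) *: u2).
apply: (le_trans (VV_jconv s a' x1 x2 u1 u2 hl)); rewrite /= e1 e2.
have hl2 : 0 <= 1 - l by rewrite subr_ge0.
by apply: lerD; apply: ler_wpM2l => //; exact: Fm_ge.
Qed.

Lemma Vn_cont s : continuous (fun x => Vn x s).
Proof.
apply: convex_cont_dom (Vn_conv s) _ => x.
have [u0 [h1 _]] := Vn_val x s.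
exists (fun y => Fm (VV y s) a00 u0); split; [|split].
- exact: (@Fm_cont R N n (fun a y => VV y s a u0) a00 (fun a => @VV_cont_x s a u0) x).
- by rewrite h1.
- by move=> y; have [_ [_ H]] := Vn_val y s; exact: H.
Qed.

End Stage.

Section Reindex.
Variable R : realType.

Definition upd (I X : finType) (w : {ffun I -> X}) (i0 : I) (y : X) : {ffun I -> X} :=
  [ffun j => if j == i0 then y else w j].

Lemma sum_upd (I X : finType) (F : {ffun I -> X} -> R) (i0 : I) (y0 : X) :
  \sum_w F w = \sum_(w : {ffun I -> X}) (w i0 == y0)%:R * \sum_y F (upd w i0 y).
Proof.
under [RHS]eq_bigr do rewrite mulr_sumr.
rewrite exchange_big /=.
rewrite (partition_big (fun w : {ffun I -> X} => w i0) predT) //=.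
apply: eq_bigr => y _.
rewrite [RHS](eq_bigr (fun w : {ffun I -> X} => if w i0 == y0 then F (upd w i0 y) else 0)); last first.
  by move=> w _; case: eqP => _; rewrite ?mul1r ?mul0r.
rewrite -big_mkcond /=.
rewrite (reindex_onto (fun w : {ffun I -> X} => upd w i0 y) (fun w : {ffun I -> X} => upd w i0 y0)) /=; last first.
  move=> w /eqP wy; apply/ffunP => j; rewrite !ffunE.
  by case: eqP => [->|].
apply: eq_bigl => w; rewrite /upd ffunE eqxx eqxx andTb.
apply/eqP/eqP => H.
  by have := congr1 (fun f : {ffun I -> X} => f i0) H; rewrite !ffunE eqxx.
by apply/ffunP => j; rewrite !ffunE; case: eqP => [->|].
Qed.

Lemma prod_split_lt T (f : 'I_T -> R) k (hk : (k < T)%N) :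
  \prod_(i < T | (i < k.+1)%N) f i = (\prod_(i < T | (i < k)%N) f i) * f (Ordinal hk).
Proof.
rewrite (bigD1 (Ordinal hk)) //= mulrC; congr (_ * _); apply: eq_bigl => i.
by rewrite -val_eqE /= ltnS; case: ltngtP.
Qed.

Lemma sum_split_lt T (f : 'I_T -> R) k (hk : (k < T)%N) :
  \sum_(i < T | (i < k.+1)%N) f i = (\sum_(i < T | (i < k)%N) f i) + f (Ordinal hk).
Proof.
rewrite (bigD1 (Ordinal hk)) //= addrC; congr (_ + _); apply: eq_bigl => i.
by rewrite -val_eqE /= ltnS; case: ltngtP.
Qed.

Lemma prod_split_ge T (f : 'I_T -> R) k (hk : (k < T)%N) :
  \prod_(i < T | ~~ (i < k)%N) f i =
  f (Ordinal hk) * \prod_(i < T | ~~ (i < k.+1)%N) f i.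
Proof.
rewrite (bigD1 (Ordinal hk)) /= ?ltnn //; congr (_ * _); apply: eq_bigl => i.
by rewrite -val_eqE /= ltnS -!leqNgt; case: ltngtP.
Qed.

End Reindex.

Section Game.
Variables (R : realType) (n m nF N T : nat) (A : nat -> 'M[R]_n)
  (B : nat -> 'M[R]_(n, m)) (P : nat -> 'I_N -> 'I_nF -> 'I_nF -> R)
  (q : nat -> 'I_nF -> R) (sig : nat -> 'cV[R]_n -> 'cV[R]_m -> R)
  (sigT : 'cV[R]_n -> R) (g : nat -> 'I_N -> 'I_nF -> R) (gT : 'I_nF -> R)
  (x0 : 'cV[R]_n) (s0 : 'I_nF).
Hypothesis N0 : (0 < N)%N.
Hypothesis P0 : forall t a j i, 0 <= P t a j i.
Hypothesis P1 : forall t a j, \sum_i P t a j i = 1.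
Hypothesis q01 : forall t i, 0 <= q t i <= 1.
Variables (us : @ctrl_strat R n m nF) (ps : @jam_strat R n m nF N).
Hypothesis ps_adm : admissible_jam T ps.
Variable V : nat -> 'cV[R]_n -> 'I_nF -> R.
Hypothesis VT : forall x s, V T x s = sigT x - gT s.

Definition yy0 : 'I_N * 'I_nF * bool := (a00 N0, s0, false).
Definition xk (w : Defs.path nF N T) k := xAt A B x0 s0 us w k.
Definition sk (w : Defs.path nF N T) k := sAt s0 w k.
Definition piw (w : Defs.path nF N T) (i : 'I_T) :=
  ps i (xk w i) (sk w i) (us i (xk w i) (sk w i)) (w i).1.1 0
  * P i (w i).1.1 (sk w i) (w i).1.2
  * (if (w i).2 then q i (w i).1.2 else 1 - q i (w i).1.2).
Definition cstw (w : Defs.path nF N T) (i : 'I_T) :=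
  sig i (xk w i) (us i (xk w i) (sk w i)) - g i (w i).1.1 (sk w i).
Definition Phi t x s :=
  dotv (ps t x s (us t x s)) (Vvec A B P q sig g t (V t.+1) x s (us t x s)).
Definition Fk k (w : Defs.path nF N T) :=
  (\prod_(i < T | (i < k)%N) piw w i) *
  (\prod_(i < T | ~~ (i < k)%N) ((w i == yy0)%:R)) *
  (\sum_(i < T | (i < k)%N) cstw w i + V k (xk w k) (sk w k)).
Definition Sk k := \sum_(w : Defs.path nF N T) Fk k w.
Definition Gk k (w : Defs.path nF N T) :=
  (\prod_(i < T | (i < k)%N) piw w i) *
  (\prod_(i < T | ~~ (i < k.+1)%N) ((w i == yy0)%:R)).

Lemma sk_S w k (hk : (k < T)%N) : sk w k.+1 = (w (Ordinal hk)).1.2.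
Proof. by rewrite /sk /= insubT. Qed.

Lemma xk_S w k (hk : (k < T)%N) : xk w k.+1 =
  A k *m xk w k + (nat_of_bool (w (Ordinal hk)).2)%:R *: (B k *m us k (xk w k) (sk w k)).
Proof. by rewrite /xk /= insubT. Qed.

Lemma agree (w w' : Defs.path nF N T) K : (forall j : 'I_T, (j < K)%N -> w j = w' j) ->
  forall i, (i <= K)%N -> xk w i = xk w' i /\ sk w i = sk w' i.
Proof.
move=> H; elim => [|i IH] hi //.
have [e1 e2] := IH (ltnW hi).
case: (ltnP i T) => hT.
  rewrite !xk_S !sk_S e1 e2 H //.
rewrite /xk /sk /=.
case: insubP => [j _ hj|_]; last by split => //; exact: e1.
by move: hT; rewrite -hj leqNgt ltn_ord.
Qed.

Lemma piw_ge0 w i : 0 <= piw w i.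
Proof.
rewrite /piw; have [hp _] := ps_adm (xk w i) (sk w i) (us i (xk w i) (sk w i)) (ltn_ord i).
have [hq0 hq1] := andP (q01 i (w i).1.2).
rewrite !mulr_ge0 //; case: (w i).2 => //; by rewrite subr_ge0.
Qed.

Lemma Gk_ge0 k w : 0 <= Gk k w.
Proof.
rewrite /Gk mulr_ge0 //; first by apply: prodr_ge0 => i _; exact: piw_ge0.
by apply: prodr_ge0 => i _; rewrite ler0n.
Qed.

Lemma sum_triple (F : 'I_N * 'I_nF * bool -> R) :
  \sum_y F y = \sum_a \sum_j \sum_b F (a, j, b).
Proof. by rewrite pair_bigA pair_bigA /=; apply: eq_bigr => -[[a j] b] _. Qed.

Lemma stage_sum (p : 'cV[R]_N) (hp : simplex N p) k x s u (Wn : 'cV[R]_n -> 'I_nF -> R) (C : R) :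
  \sum_(y : 'I_N * 'I_nF * bool)
    (p y.1.1 0 * P k y.1.1 s y.1.2 * (if y.2 then q k y.1.2 else 1 - q k y.1.2)) *
    (C + (sig k x u - g k y.1.1 s) + Wn (A k *m x + (nat_of_bool y.2)%:R *: (B k *m u)) y.1.2)
  = C + dotv p (Vvec A B P q sig g k Wn x s u).
Proof.
have [p0 p1] := hp.
rewrite sum_triple /=.
rewrite /dotv.
have -> : C + \sum_a p a 0 * (Vvec A B P q sig g k Wn x s u) a 0 =
    \sum_a (p a 0 * C + p a 0 * (Vvec A B P q sig g k Wn x s u) a 0).
  by rewrite big_split /= -mulr_suml p1 mul1r.
apply: eq_bigr => a _; rewrite mxE.
rewrite (eq_bigr (fun j => p a 0 * (C + (sig k x u - g k a s)) * P k a s j +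
   p a 0 * (P k a s j * (q k j * Wn (A k *m x + B k *m u) j +
   (1 - q k j) * Wn (A k *m x) j)))); last first.
  move=> j _; rewrite big_bool /= scale1r scale0r addr0; ring.
rewrite big_split /= -mulr_sumr -mulr_sumr P1; ring.
Qed.

Lemma Fk_split k (hk : (k < T)%N) w :
  Fk k w = (w (Ordinal hk) == yy0)%:R *
    (Gk k w * (\sum_(i < T | (i < k)%N) cstw w i + V k (xk w k) (sk w k))).
Proof. by rewrite /Fk /Gk (prod_split_ge _ hk); ring. Qed.

Lemma Fk_upd k (hk : (k < T)%N) w y :
  Fk k.+1 (upd w (Ordinal hk) y) = Gk k w *
   ((ps k (xk w k) (sk w k) (us k (xk w k) (sk w k)) y.1.1 0
     * P k y.1.1 (sk w k) y.1.2 * (if y.2 then q k y.1.2 else 1 - q k y.1.2)) *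
    ((\sum_(i < T | (i < k)%N) cstw w i) +
      (sig k (xk w k) (us k (xk w k) (sk w k)) - g k y.1.1 (sk w k)) +
      V k.+1 (A k *m xk w k + (nat_of_bool y.2)%:R *: (B k *m us k (xk w k) (sk w k))) y.1.2)).
Proof.
set w' := upd w (Ordinal hk) y.
have ag : forall i, (i <= k)%N -> xk w' i = xk w i /\ sk w' i = sk w i.
  apply: agree => j hj; rewrite /w' /upd ffunE.
  by case: eqP => // hj'; move: hj; rewrite hj' /= ltnn.
have wk : w' (Ordinal hk) = y by rewrite /w' /upd ffunE eqxx.
have [ex es] := ag k (leqnn k).
have eqpi : \prod_(i < T | (i < k)%N) piw w' i = \prod_(i < T | (i < k)%N) piw w i.
  apply: eq_bigr => i hi; have [e1 e2] := ag i (ltnW hi).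
  have hwi : w' i = w i.
    by rewrite /w' /upd ffunE; case: eqP => // hi'; move: hi; rewrite hi' /= ltnn.
  by rewrite /piw e1 e2 hwi.
have eqc : \sum_(i < T | (i < k)%N) cstw w' i = \sum_(i < T | (i < k)%N) cstw w i.
  apply: eq_bigr => i hi; have [e1 e2] := ag i (ltnW hi).
  have hwi : w' i = w i.
    by rewrite /w' /upd ffunE; case: eqP => // hi'; move: hi; rewrite hi' /= ltnn.
  by rewrite /cstw e1 e2 hwi.
have eqind : \prod_(i < T | ~~ (i < k.+1)%N) ((w' i == yy0)%:R : R) =
             \prod_(i < T | ~~ (i < k.+1)%N) ((w i == yy0)%:R : R).
  apply: eq_bigr => i hi; rewrite /w' /upd ffunE; case: (i =P Ordinal hk) => // hi'.
  by move: hi; rewrite hi' /= ltnSn.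
rewrite /Fk /Gk (prod_split_lt _ hk) (sum_split_lt _ hk) eqpi eqc eqind.
rewrite (xk_S _ hk) (sk_S _ hk) wk ex es.
rewrite /piw /cstw wk ex es /=; ring.
Qed.

Lemma step k (hk : (k < T)%N) : Sk k.+1 = Sk k +
  \sum_(w : Defs.path nF N T) ((w (Ordinal hk) == yy0)%:R * Gk k w) *
     (Phi k (xk w k) (sk w k) - V k (xk w k) (sk w k)).
Proof.
rewrite /Sk [in LHS](sum_upd _ (Ordinal hk) yy0).
rewrite [X in _ = X + _](eq_bigr (fun w : Defs.path nF N T => (w (Ordinal hk) == yy0)%:R *
    (Gk k w * (\sum_(i < T | (i < k)%N) cstw w i + V k (xk w k) (sk w k))))); last first.
  by move=> w _; exact: Fk_split.
rewrite -big_split /=; apply: eq_bigr => w _.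
under eq_bigr do rewrite (Fk_upd hk).
rewrite -mulr_sumr.
have hp := ps_adm (xk w k) (sk w k) (us k (xk w k) (sk w k)) hk.
rewrite (@stage_sum _ hp k (xk w k) (sk w k) (us k (xk w k) (sk w k)) (V k.+1)).
rewrite /Phi; ring.
Qed.

Lemma S0 : Sk 0 = V 0 x0 s0.
Proof.
rewrite /Sk /Fk.
have Hw : forall w : Defs.path nF N T, \prod_(i < T | ~~ (i < 0)%N) ((w i == yy0)%:R : R)
    = (w == [ffun=> yy0])%:R.
  move=> w; case: eqP => [->|hne].
    by apply: big1 => i _; rewrite ffunE eqxx.
  have [i hi] : exists i, w i != yy0.
    apply/existsP; apply: contraT; rewrite negb_exists => /forallP H.
    by case: hne; apply/ffunP => i; rewrite ffunE; apply/eqP; have := H i; rewrite negbK.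
  by rewrite (bigD1 i) //= (negbTE hi) /= mulr0n mul0r.
under eq_bigr do rewrite Hw big_pred0 ?big_pred0 //.
rewrite (bigD1 [ffun=> yy0]) //= eqxx big1 ?addr0; last first.
  by move=> w /negbTE ->; rewrite mul1r mulr0n mul0r.
by rewrite /xk /= mul1r mulr1n mul1r add0r.
Qed.

Lemma ST : Sk T = expected_payoff T A B P q sig sigT g gT x0 s0 us ps.
Proof.
rewrite /Sk /expected_payoff; apply: eq_bigr => w _.
rewrite /Fk (eq_bigl xpredT); last by move=> i; rewrite ltn_ord.
rewrite (eq_bigl xpred0 (fun i : 'I_T => ((w i == yy0)%:R : R))); last first.
  by move=> i; rewrite ltn_ord.
rewrite big_pred0_eq mulr1 (eq_bigl xpredT (cstw w)); last by move=> i; rewrite ltn_ord.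
rewrite VT /path_prob /payoff /piw /cstw /xk /sk /uAt.
by rewrite addrA.
Qed.

Lemma dp_le : (forall t x s, (t < T)%N -> Phi t x s <= V t x s) ->
  expected_payoff T A B P q sig sigT g gT x0 s0 us ps <= V 0 x0 s0.
Proof.
move=> H; rewrite -ST -S0.
suff : forall k, (k <= T)%N -> Sk k <= Sk 0 by apply; exact: leqnn.
elim => [//|k IH] hk; rewrite (step hk).
apply: le_trans (IH (ltnW hk)); rewrite gerDl.
apply: sumr_le0 => w _; apply: mulr_ge0_le0.
  by rewrite mulr_ge0 ?ler0n ?Gk_ge0.
by rewrite subr_le0; apply: H.
Qed.

Lemma dp_ge : (forall t x s, (t < T)%N -> V t x s <= Phi t x s) ->
  V 0 x0 s0 <= expected_payoff T A B P q sig sigT g gT x0 s0 us ps.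
Proof.
move=> H; rewrite -ST -S0.
suff : forall k, (k <= T)%N -> Sk 0 <= Sk k by apply; exact: leqnn.
elim => [//|k IH] hk; rewrite (step hk).
apply: le_trans (IH (ltnW hk)) _; rewrite lerDl.
apply: sumr_ge0 => w _; apply: mulr_ge0.
  by rewrite mulr_ge0 ?ler0n ?Gk_ge0.
by rewrite subr_ge0; apply: H.
Qed.

End Game.

Unset Implicit Arguments.

Theorem theorem4 (R : realType) (n m nF N T : nat)
  (A : nat -> 'M[R]_n) (B : nat -> 'M[R]_(n, m))
  (P : nat -> 'I_N -> 'I_nF -> 'I_nF -> R) (q : nat -> 'I_nF -> R)
  (sig : nat -> 'cV[R]_n -> 'cV[R]_m -> R) (sigT : 'cV[R]_n -> R)
  (g : nat -> 'I_N -> 'I_nF -> R) (gT : 'I_nF -> R)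
  (x0 : 'cV[R]_n) (s0 : 'I_nF) :
  (* standing assumptions of the model *)
  (0 < N)%N ->
  (forall t a j i, 0 <= P t a j i) ->
  (forall t a j, \sum_i P t a j i = 1) ->
  (forall t i, 0 <= q t i <= 1) ->
  (forall t x u, 0 <= sig t x u) ->
  (forall x, 0 <= sigT x) ->
  (* (i) *)
  (forall t, (t < T)%N -> exists (e d : R) (al be : R -> R),
     tends_to_infty al /\ tends_to_infty be /\
     (forall y, 0 <= y -> e <= al y) /\ (forall y, 0 <= y -> d <= be y) /\
     (forall x u, al (enorm u) + be (enorm x) <= sig t x u)) ->
  (* (ii) *)
  (forall t, (t < T)%N -> jointly_convex (sig t)) ->
  (* (iii) *)
  convex_fun sigT ->
  (exists (dT : R) (beT : R -> R),
     tends_to_infty beT /\ (forall y, 0 <= y -> 0 <= beT y) /\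
     (forall y, 0 <= y -> dT <= beT y) /\
     (forall x, beT (enorm x) <= sigT x)) ->
  (* (iv) *)
  continuous sigT ->
  (forall t, (t < T)%N -> unif_cont_in_x (sig t)) ->
  (forall t x, (t < T)%N -> continuous (sig t x)) ->
  (* conclusions *)
  (forall t, (t < T)%N ->
     (forall x s,
        infsup A B P q sig g t (Vval T A B P q sig sigT g gT t.+1) x s
        = supinf A B P q sig g t (Vval T A B P q sig sigT g gT t.+1) x s /\
        infsup A B P q sig g t (Vval T A B P q sig sigT g gT t.+1) x s
        = (Vval T A B P q sig sigT g gT t x s)%:E) /\
     (forall s, convex_fun (fun x => Vval T A B P q sig sigT g gT t x s) /\
                continuous (fun x => Vval T A B P q sig sigT g gT t x s))) /\
  (exists (us : ctrl_strat n m nF) (ps : jam_strat n m nF N),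
     (forall t x s, (t < T)%N ->
        ereal_sup [set (dotv p (Vvec A B P q sig g t
                          (Vval T A B P q sig sigT g gT t.+1) x s (us t x s)))%:E
                  | p in simplex N]
        = infsup A B P q sig g t (Vval T A B P q sig sigT g gT t.+1) x s) /\
     (forall t x s u, (t < T)%N ->
        simplex N (ps t x s u) /\
        ereal_inf [set (dotv (ps t x s u) (Vvec A B P q sig g t
                          (Vval T A B P q sig sigT g gT t.+1) x s u'))%:E
                  | u' in [set: 'cV[R]_m]]
        = supinf A B P q sig g t (Vval T A B P q sig sigT g gT t.+1) x s)) /\
  (forall (us : ctrl_strat n m nF) (ps : jam_strat n m nF N),
     (forall t x s, (t < T)%N ->
        ereal_sup [set (dotv p (Vvec A B P q sig g t
                          (Vval T A B P q sig sigT g gT t.+1) x s (us t x s)))%:E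
                  | p in simplex N]
        = infsup A B P q sig g t (Vval T A B P q sig sigT g gT t.+1) x s) ->
     (forall t x s u, (t < T)%N ->
        simplex N (ps t x s u) /\
        ereal_inf [set (dotv (ps t x s u) (Vvec A B P q sig g t
                          (Vval T A B P q sig sigT g gT t.+1) x s u'))%:E
                  | u' in [set: 'cV[R]_m]]
        = supinf A B P q sig g t (Vval T A B P q sig sigT g gT t.+1) x s) ->
     saddle_point T A B P q sig sigT g gT x0 s0 us ps).
Proof.
move=> N0 P0 P1 q01 sig0 sigT0 Hi Hii HcT HbT HcontT Hucx Hcu.
pose W k := Vrev T A B P q sig sigT g gT k.
have HW : forall k, (k <= T)%N ->
    (forall s, convex_fun (fun x => W k x s)) /\
    (forall s, continuous (fun x => W k x s)) /\
    (exists L, forall x s, L <= W k x s).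
  elim => [_|k IH hk].
    split; [|split].
    - move=> s x y l hl; rewrite /W /=; have := HcT x y l hl; lra.
    - by move=> s; apply: cont_subc; exact: HcontT.
    - exists (- \sum_s `|gT s|) => x s; rewrite /W /=.
      have h1 := sigT0 x.
      have h2 : gT s <= \sum_s `|gT s|.
        apply: (le_trans (ler_norm _)); rewrite (bigD1 s) //= lerDl.
        by apply: sumr_ge0.
      lra.
  have [c1 [c2 [L HL]]] := IH (ltnW hk).
  have ht : (T - k.+1 < T)%N.
    by rewrite ltn_subrL; apply/andP; split => //; exact: (leq_ltn_trans (leq0n k) hk).
  have [e [d [al [be [alinf [beinf [alge [bege sigge]]]]]]]] := Hi _ ht.
  split; [|split].
  - move=> s; exact: (Vn_conv A B g N0 P0 P1 q01 alinf sigge (Hii _ ht)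
      (fun x => Hcu _ x ht) c1 c2 HL s).
  - move=> s; exact: (Vn_cont N0 P0 P1 q01 alinf sigge (Hii _ ht) (Hucx _ ht)
      (fun x => Hcu _ x ht) c1 c2 HL).
  - exists (e + d - \sum_a \sum_j `|g (T - k.+1)%N a j| + L) => x s.
    exact: (Vn_lb A B g N0 P0 P1 q01 alinf alge bege sigge (Hii _ ht)
      (fun x => Hcu _ x ht) c1 c2 HL x s).
have VvalS : forall t, (t < T)%N -> forall x s,
    Vval T A B P q sig sigT g gT t x s =
    fine (infsup A B P q sig g t (Vval T A B P q sig sigT g gT t.+1) x s).
  move=> t ht x s; rewrite /Vval -(subnSK ht) /=.
  by rewrite (subnSK ht) (subKn (ltnW ht)).
have VvalW : forall t, Vval T A B P q sig sigT g gT t = W (T - t)%N by [].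
have ST : forall t, (t < T)%N -> forall x s,
   infsup A B P q sig g t (Vval T A B P q sig sigT g gT t.+1) x s
   = supinf A B P q sig g t (Vval T A B P q sig sigT g gT t.+1) x s /\
   infsup A B P q sig g t (Vval T A B P q sig sigT g gT t.+1) x s
   = (Vval T A B P q sig sigT g gT t x s)%:E /\
   (exists u0, ereal_sup [set (dotv p (Vvec A B P q sig g t
                          (Vval T A B P q sig sigT g gT t.+1) x s u0))%:E
                  | p in simplex N]
        = infsup A B P q sig g t (Vval T A B P q sig sigT g gT t.+1) x s) /\
   (exists p, simplex N p /\
        ereal_inf [set (dotv p (Vvec A B P q sig g t
                          (Vval T A B P q sig sigT g gT t.+1) x s u'))%:E
                  | u' in [set: 'cV[R]_m]]
        = supinf A B P q sig g t (Vval T A B P q sig sigT g gT t.+1) x s).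
  move=> t ht x s.
  have hk : (T - t.+1 <= T)%N by exact: leq_subr.
  have [c1 [c2 [L HL]]] := HW _ hk.
  have [e [d [al [be [alinf [beinf [alge [bege sigge]]]]]]]] := Hi _ ht.
  have [u0 [p [pS [hi [hs [hmin hp]]]]]] := stage_main A B g N0 P0 P1 q01 alinf sigge
      (Hii _ ht) (fun x => Hcu _ x ht) c1 c2 HL x s.
  have hsup : ereal_sup [set (dotv p' (Vvec A B P q sig g t
       (Vval T A B P q sig sigT g gT t.+1) x s u0))%:E | p' in simplex N]
       = infsup A B P q sig g t (Vval T A B P q sig sigT g gT t.+1) x s.
    by rewrite (sup_simplex _ (a00 N0)) hi.
  split; first by rewrite hi hs.
  split; first by rewrite VvalS // hi.
  split; first by exists u0.
  exists p; split => //.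
  have hle : dotv p (Vvec A B P q sig g t (Vval T A B P q sig sigT g gT t.+1) x s u0)
      <= Fm (VV A B P q sig g t (Vval T A B P q sig sigT g gT t.+1) x s) (a00 N0) u0.
    exact: (dot_le_max _ (a00 N0) pS).
  rewrite (inf_attained (f := fun u => dotv p (Vvec A B P q sig g t
      (Vval T A B P q sig sigT g gT t.+1) x s u)) (x0 := u0)) //.
    rewrite hs; congr (_%:E); apply/le_anti/andP; split => //.
  move=> u _; apply: (le_trans hle); exact: hp.
split.
  move=> t ht; split.
    by move=> x s; have [h1 [h2 _]] := ST t ht x s; split.
  move=> s; have [c1 [c2 _]] := HW (T - t)%N (leq_subr t T).
  by split; [exact: c1 | exact: c2].
split.
  have Hu : forall tx : nat * 'cV[R]_n * 'I_nF, exists u, (tx.1.1 < T)%N ->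
      ereal_sup [set (dotv p (Vvec A B P q sig g tx.1.1
          (Vval T A B P q sig sigT g gT tx.1.1.+1) tx.1.2 tx.2 u))%:E | p in simplex N]
      = infsup A B P q sig g tx.1.1 (Vval T A B P q sig sigT g gT tx.1.1.+1) tx.1.2 tx.2.
    move=> [[t x] s] /=; case: (boolP (t < T)%N) => ht; last first.
      by exists 0.
    by have [_ [_ [[u0 hu] _]]] := ST t ht x s; exists u0 => _.
  have [fu Hfu] := choice Hu.
  have Hp : forall tx : nat * 'cV[R]_n * 'I_nF, exists p, (tx.1.1 < T)%N ->
      simplex N p /\
      ereal_inf [set (dotv p (Vvec A B P q sig g tx.1.1
          (Vval T A B P q sig sigT g gT tx.1.1.+1) tx.1.2 tx.2 u'))%:E | u' in [set: 'cV[R]_m]]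
      = supinf A B P q sig g tx.1.1 (Vval T A B P q sig sigT g gT tx.1.1.+1) tx.1.2 tx.2.
    move=> [[t x] s] /=; case: (boolP (t < T)%N) => ht; last first.
      by exists 0.
    by have [_ [_ [_ [p hp]]]] := ST t ht x s; exists p => _.
  have [fp Hfp] := choice Hp.
  exists (fun t x s => fu (t, x, s)), (fun t x s u => fp (t, x, s)); split.
    by move=> t x s ht; exact: (Hfu (t, x, s) ht).
  by move=> t x s u ht; exact: (Hfp (t, x, s) ht).
move=> us ps Hus Hps.
have adm : admissible_jam T ps by move=> t x s u ht; have [] := Hps t x s u ht.
pose V := Vval T A B P q sig sigT g gT.
have VT : forall x s, V T x s = sigT x - gT s by move=> x s; rewrite /V /Vval subnn.
have le1 : forall ps', admissible_jam T ps' ->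
    expected_payoff T A B P q sig sigT g gT x0 s0 us ps' <= V 0%N x0 s0.
  move=> ps' hps'; apply: (dp_le x0 s0 N0 P0 P1 q01 hps' VT) => t x s ht.
  have [_ [h2 _]] := ST t ht x s.
  rewrite /Phi -lee_fin -h2 -(Hus t x s ht).
  apply: ereal_sup_ubound; exists (ps' t x s (us t x s)) => //; exact: hps'.
have ge1 : forall us', V 0%N x0 s0 <= expected_payoff T A B P q sig sigT g gT x0 s0 us' ps.
  move=> us'; apply: (dp_ge x0 s0 N0 P0 P1 q01 adm VT) => t x s ht.
  have [h1 [h2 _]] := ST t ht x s.
  rewrite /Phi -lee_fin -h2 h1 -(Hps t x s (us' t x s) ht).2.
  by apply: ereal_inf_lbound; exists (us' t x s).
have Eq : expected_payoff T A B P q sig sigT g gT x0 s0 us ps = V 0%N x0 s0.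
  by apply/le_anti/andP; split; [exact: le1 | exact: ge1].
split => //; split.
  apply/le_anti/andP; split.
    apply: le_ereal_inf_tmp => _ [u _ <-].
    apply: le_ereal_sup_tmp.
    exists (expected_payoff T A B P q sig sigT g gT x0 s0 u ps)%:E; first by exists ps.
    by rewrite lee_fin Eq; exact: ge1.
  apply: ge_ereal_inf.
  exists (ereal_sup [set (expected_payoff T A B P q sig sigT g gT x0 s0 us p)%:E
     | p in admissible_jam T]); first by exists us.
  by apply: ge_ereal_sup => _ [p hp <-]; rewrite lee_fin Eq; exact: le1.
apply/le_anti/andP; split.
  apply: le_ereal_sup_tmp.
  exists (ereal_inf [set (expected_payoff T A B P q sig sigT g gT x0 s0 u ps)%:E
     | u in [set: ctrl_strat n m nF]]); first by exists ps.
  by apply: le_ereal_inf_tmp => _ [u _ <-]; rewrite lee_fin Eq; exact: ge1.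
apply: ge_ereal_sup => _ [p hp <-].
apply: ge_ereal_inf; exists (expected_payoff T A B P q sig sigT g gT x0 s0 us p)%:E.
  by exists us.
by rewrite lee_fin Eq; exact: le1.
Qed.
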